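(* Let $M$ be a compact smooth manifold with metric $d_M$, $\phi:M\to M$ a diffeomorphism, $\omega:M\to\mathbb{R}$ continuous, $F:\mathbb{R}^N\times\mathbb{R}\to\mathbb{R}^N$, and let $f:M\to\mathbb{R}^N$ be a synchronization function of the driven system. Fix $K\in\mathbb{N}$ and define $\Gamma_K:M\to\mathbb{R}^{K+1}$ by $\Gamma_K(x)=(\omega(x),\omega(\phi(x)),\dots,\omega(\phi^K(x)))$. Assume $\Gamma_K$ has a separation modulus $\eta$, and let $P:\mathbb{R}^N\to\mathbb{R}^{K+1}$ satisfy \[ \sup_{x\in M}\|P(f(x))-\Gamma_K(x)\|\le\varepsilon \] for some $\varepsilon>0$. Then for every $\delta>0$ with $2\varepsilon<\eta(\delta)$, one has: for all $x,x'\in M$, $f(x)=f(x')$ implies $d_M(x,x')<\delta$.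
   Context: The driven system is $h_{t+1}=F(h_t,\omega(\phi^t(x_0)))$. A synchronization function is a continuous $f:M\to\mathbb{R}^N$ such that (a) $f(\phi(x))=F(f(x),\omega(x))$ for all $x\in M$, and (b) for some compact $K_0\subset\mathbb{R}^N$ and every $x_0\in M$, $h_0\in K_0$, the driven trajectory satisfies $\|h_t-f(\phi^t(x_0))\|\to0$. A separation modulus for a continuous $g:M\to\mathbb{R}^p$ is any nondecreasing function $\eta:(0,\operatorname{diam}(M)]\to(0,\infty)$ such that for all $x,x'\in M$, $d_M(x,x')\ge\delta$ implies $\|g(x)-g(x')\|\ge\eta(\delta)$. *)

(* Defs.v *)
From HB Require Import structures.
From mathcomp Require Import all_boot all_order all_algebra.
From mathcomp Require Import all_classical all_reals all_analysis.
From mathcomp Require Import Rstruct Rstruct_topology.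
From Stdlib Require Import Rdefinitions.

Set Implicit Arguments.
Unset Strict Implicit.
Unset Printing Implicit Defensive.

Import Order.TTheory GRing.Theory Num.Theory.
Import numFieldNormedType.Exports.

Local Open Scope classical_set_scope.
Local Open Scope ring_scope.

Definition enorm (n : nat) (v : 'rV[R]_n) : R :=
  Num.sqrt (\sum_(i < n) v ord0 i ^+ 2).

Definition diam (M : metricType R) : R :=
  sup [set mdist x y | x in [set: M] & y in [set: M]].

Definition homeomorphism (M : metricType R) (phi : M -> M) : Prop :=
  continuous phi /\
  exists psi : M -> M,
    continuous psi /\ cancel phi psi /\ cancel psi phi.

Fixpoint driven_traj (M : Type) (N : nat) (F : 'rV[R]_N -> R -> 'rV[R]_N)
  (omega : M -> R) (phi : M -> M) (x0 : M) (h0 : 'rV[R]_N) (t : nat)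
  : 'rV[R]_N :=
  match t with
  | 0 => h0
  | t'.+1 => F (driven_traj F omega phi x0 h0 t') (omega (iter t' phi x0))
  end.

Definition sync_function (M : metricType R) (N : nat)
  (F : 'rV[R]_N -> R -> 'rV[R]_N) (omega : M -> R) (phi : M -> M)
  (f : M -> 'rV[R]_N) : Prop :=
  continuous f /\
  (forall x : M, f (phi x) = F (f x) (omega x)) /\
  exists K0 : set 'rV[R]_N, compact K0 /\
    forall (x0 : M) (h0 : 'rV[R]_N), K0 h0 ->
      (fun t : nat => enorm (driven_traj F omega phi x0 h0 t - f (iter t phi x0)))
        @ \oo --> (0 : R).

Definition separation_modulus (M : metricType R) (p : nat)
  (g : M -> 'rV[R]_p) (eta : R -> R) : Prop :=
  (forall d1 d2 : R, 0 < d1 -> d1 <= d2 -> d2 <= diam M -> eta d1 <= eta d2) /\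
  (forall d : R, 0 < d -> d <= diam M -> 0 < eta d) /\
  (forall d : R, 0 < d -> d <= diam M ->
     forall x x' : M, d <= mdist x x' -> eta d <= enorm (g x - g x')).

Definition Gamma (M : Type) (omega : M -> R) (phi : M -> M) (K : nat)
  (x : M) : 'rV[R]_K.+1 :=
  \row_(i < K.+1) omega (iter i phi x).

(* Main.v *)
Require Import Defs.
From HB Require Import structures.
From mathcomp Require Import all_boot all_order all_algebra.
From mathcomp Require Import all_classical all_reals all_analysis.
From mathcomp Require Import Rstruct Rstruct_topology.
From Stdlib Require Import Rdefinitions.
From mathcomp Require Import ring lra.
Import Order.TTheory GRing.Theory Num.Theory.
Import numFieldNormedType.Exports.
Local Open Scope classical_set_scope.
Local Open Scope ring_scope.
Lemma bnd (M : metricType R) (x0 : M) : compact [set: M] ->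
  exists B : R, forall y : M, mdist x0 y <= B.
Proof.
move=> /compact_near_coveringP cM.
have := cM R (pinfty_nbhs R) (fun i y => mdist x0 y <= i) _.
have H : forall x : M, [set: M] x ->
   \forall x' \near x & i \near pinfty_nbhs R, mdist x0 x' <= i.
  move=> x _.
  near=> x' i => /=.
  apply: le_trans (metric_triangle x0 x x') _.
  apply: ltW; apply: (@lt_trans _ _ (mdist x0 x + 1)).
    rewrite ltrD2l. near: x'.
    by rewrite -metricType_numDomainType.nbhs_nbhs_mdist; exists 1 => //=; rewrite ltr01.
  near: i; apply: nbhs_pinfty_gt; exact: num_real.
move=> /(_ _ H) [B [_ HB]].
by exists (B + 1) => y; apply: (HB (B + 1)) => //; rewrite ltrDl ltr01.
Unshelve. all: by end_near.
Qed.
Lemma lagrange n (a b : 'I_n -> R) :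
  \sum_i \sum_j (a i * b j - a j * b i) ^+ 2 =
  2 * ((\sum_i a i ^+ 2) * (\sum_i b i ^+ 2) - (\sum_i a i * b i) ^+ 2).
Proof.
have E : forall i j, (a i * b j - a j * b i) ^+ 2 =
   a i ^+ 2 * b j ^+ 2 + a j ^+ 2 * b i ^+ 2 - 2 * ((a i * b i) * (a j * b j)).
  by move=> i j; ring.
under eq_bigr do under eq_bigr do rewrite E.
have X : \sum_i \sum_j a i ^+ 2 * b j ^+ 2 = (\sum_i a i ^+ 2) * (\sum_i b i ^+ 2).
  by rewrite mulr_suml; apply: eq_bigr => i _; rewrite mulr_sumr.
have Y : \sum_i \sum_j a j ^+ 2 * b i ^+ 2 = (\sum_i a i ^+ 2) * (\sum_i b i ^+ 2).
  by rewrite exchange_big.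
have Z : \sum_i \sum_j (a i * b i) * (a j * b j) = (\sum_i a i * b i) ^+ 2.
  by rewrite expr2 mulr_suml; apply: eq_bigr => i _; rewrite mulr_sumr.
transitivity (\sum_i \sum_j a i ^+ 2 * b j ^+ 2 + \sum_i \sum_j a j ^+ 2 * b i ^+ 2
   - 2 * \sum_i \sum_j (a i * b i) * (a j * b j)); last first. rewrite X Y Z; have H : forall p q r : R, p * q + p * q - 2 * r ^+ 2 = 2 * (p * q - r ^+ 2) by move=> *; ring. exact: H.
rewrite mulr_sumr -big_split -sumrB /=; apply: eq_bigr => i _.
rewrite mulr_sumr -big_split -sumrB; apply: eq_bigr => j _; by [].
Qed.

Lemma cauchy_schwarz n (a b : 'I_n -> R) :
  (\sum_i a i * b i) ^+ 2 <= (\sum_i a i ^+ 2) * (\sum_i b i ^+ 2).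
Proof.
rewrite -subr_ge0.
have : 0 <= \sum_i \sum_j (a i * b j - a j * b i) ^+ 2.
  by apply: sumr_ge0 => i _; apply: sumr_ge0 => j _; apply: sqr_ge0.
rewrite lagrange; lra.
Qed.

Lemma mink n (a b : 'I_n -> R) :
  Num.sqrt (\sum_i (a i + b i) ^+ 2) <=
  Num.sqrt (\sum_i a i ^+ 2) + Num.sqrt (\sum_i b i ^+ 2).
Proof.
set A := \sum_i a i ^+ 2; set B := \sum_i b i ^+ 2; set C := \sum_i a i * b i.
have A0 : 0 <= A by apply: sumr_ge0 => i _; apply: sqr_ge0.
have B0 : 0 <= B by apply: sumr_ge0 => i _; apply: sqr_ge0.
have E : \sum_i (a i + b i) ^+ 2 = A + 2 * C + B.
  rewrite /A /B /C mulr_sumr -!big_split /=; apply: eq_bigr => i _; ring.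
have HC : C <= Num.sqrt A * Num.sqrt B.
  apply: le_trans (ler_norm C) _; rewrite -sqrtr_sqr -sqrtrM //.
  apply: ler_wsqrtr; exact: cauchy_schwarz.
rewrite E -[X in _ <= X]ger0_norm ?addr_ge0 ?sqrtr_ge0 // -sqrtr_sqr.
apply: ler_wsqrtr.
rewrite sqrrD !sqr_sqrtr //.
have H : forall p q r s : R, r <= s -> p + 2 * r + q <= p + s *+ 2 + q.
  move=> p q r s h; rewrite mulr2n; lra.
exact: H.
Qed.

Lemma enorm_tri n (u v w : 'rV[R]_n) :
  enorm (u - w) <= enorm (u - v) + enorm (v - w).
Proof.
rewrite /enorm.
have -> : \sum_(i < n) (u - w) ord0 i ^+ 2 =
  \sum_(i < n) ((u - v) ord0 i + (v - w) ord0 i) ^+ 2.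
  by apply: eq_bigr => i _; rewrite !mxE; congr (_ ^+ 2); ring.
exact: mink.
Qed.

Lemma enormN n (u v : 'rV[R]_n) : enorm (u - v) = enorm (v - u).
Proof.
rewrite /enorm; congr Num.sqrt; apply: eq_bigr => i _; rewrite !mxE.
have H : forall p q : R, (p - q) ^+ 2 = (q - p) ^+ 2 by move=> *; ring.
exact: H.
Qed.

Theorem proposition4 (M : metricType R) (N K : nat)
  (phi : M -> M) (omega : M -> R) (F : 'rV[R]_N -> R -> 'rV[R]_N)
  (f : M -> 'rV[R]_N) (eta : R -> R) (P : 'rV[R]_N -> 'rV[R]_K.+1)
  (eps : R) :
  compact [set: M] ->
  homeomorphism phi ->
  continuous omega ->
  sync_function F omega phi f ->
  separation_modulus (Gamma omega phi K) eta ->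
  0 < eps ->
  (forall x : M, enorm (P (f x) - Gamma omega phi K x) <= eps) ->
  forall delta : R, 0 < delta -> 2 * eps < eta delta ->
    forall x x' : M, f x = f x' -> mdist x x' < delta.
Proof.
move=> cM _ _ _ [_ [_ sep]] eps0 Pe delta d0 hd x x' fxx.
rewrite ltNge; apply/negP => dle.
have [B HB] := bnd M x cM.
have ub : mdist x x' <= diam M.
  apply: sup_upper_bound; last by exists x => //; exists x'.
  split; first by exists (mdist x x'), x => //; exists x'.
  exists (B + B) => r [a _ [b _ <-]].
  apply: le_trans (metric_triangle a x b) _.
  rewrite metric_sym; apply: lerD; exact: HB.
have := sep delta d0 (le_trans dle ub) x x' dle.
have T := @enorm_tri _ (Gamma omega phi K x) (P (f x)) (Gamma omega phi K x').
rewrite [enorm (Gamma omega phi K x - P (f x))]enormN in T.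
have h1 := Pe x; have h2 := Pe x'; rewrite -fxx in h2.
move=> h3.
have : eta delta <= eps + eps := le_trans h3 (le_trans T (lerD h1 h2)).
move: hd; rewrite -mulr2n mulr_natl; lra.
Qed.
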